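(* Let $n\ge 2$. The number of (unordered) pairs of disjoint matrices from $\Sigma_{n^2}$ is equal to the number of (unordered) pairs of disjoint matrices from $\Pi_n$.
   Context: A binary matrix is a matrix with all entries in $\{0,1\}$. An $n^2\times n^2$ binary matrix $A$ is partitioned into $n^2$ non-intersecting $n\times n$ blocks $A_{kl}$, $1\le k,l\le n$ (so $A=[A_{kl}]$). $A$ is an S-permutation matrix if each row, each column and each block of $A$ contains exactly one $1$; $\Sigma_{n^2}$ is the set of these. Two binary matrices $A=(a_{ij}),B=(b_{ij})$ of the same size are disjoint if there are no $i,j$ with $a_{ij}=b_{ij}=1$. $\Pi_n$ is the set of all $n\times n$ matrices whose entries are ordered pairs $\langle i,j\rangle$ with $i,j\in[n]=\{1,\dots,n\}$, such that in each row the first coordinates form a permutation of $[n]$ and in each column the second coordinates form a permutation of $[n]$. Two matrices $\pi'=[p'_{ij}],\pi''=[p''_{ij}]\in\Pi_n$ are disjoint if $p'_{ij}\ne p''_{ij}$ for all $i,j\in[n]$. *)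

(* Defs.v *)
From mathcomp Require Import all_boot all_algebra.
Set Implicit Arguments. Unset Strict Implicit. Unset Printing Implicit Defensive.

(* Indices are 0-based: 'I_(n*n) for rows/columns of an n^2 x n^2 matrix.
   Entry (i,j) lies in block (i %/ n, j %/ n). *)

Definition bmx (n : nat) := 'M[bool]_(n * n).

Definition is_Sperm (n : nat) (A : bmx n) : bool :=
  [&& [forall i, #|[set j | A i j]| == 1],
      [forall j, #|[set i | A i j]| == 1] &
      [forall k : 'I_n, forall l : 'I_n,
         #|[set p : 'I_(n * n) * 'I_(n * n) |
              [&& A p.1 p.2, p.1 %/ n == k & p.2 %/ n == l]]| == 1]].

Definition Sigma (n : nat) : {set bmx n} := [set A | is_Sperm A].

Definition bmx_disjoint (n : nat) (A B : bmx n) : bool :=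
  [forall i, forall j, ~~ (A i j && B i j)].

Definition pmx (n : nat) := 'M[('I_n * 'I_n)%type]_n.

Definition is_Pi (n : nat) (P : pmx n) : bool :=
  [forall i, [set (P i j).1 | j : 'I_n] == [set: 'I_n]] &&
  [forall j, [set (P i j).2 | i : 'I_n] == [set: 'I_n]].

Definition Pi (n : nat) : {set pmx n} := [set P | is_Pi P].

Definition pmx_disjoint (n : nat) (P Q : pmx n) : bool :=
  [forall i, forall j, P i j != Q i j].

Definition num_unordered_disjoint_pairs (T : finType) (S : {set T}) (disj : rel T)
  : nat :=
  #|[set U : {set T} | [&& U \subset S, #|U| == 2 &
       [forall x in U, forall y in U, (x != y) ==> disj x y]]]|.

(* Main.v *)
Require Import Defs.
From mathcomp Require Import all_boot all_algebra zify.
Set Implicit Arguments. Unset Strict Implicit. Unset Printing Implicit Defensive.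

Section Idx.
Variable n : nat.

Lemma npos (r : 'I_(n*n)) : 0 < n.
Proof. case: n r => [|m] [r Hr] //. Qed.

Lemma qlt (r : 'I_(n*n)) : r %/ n < n.
Proof. by rewrite ltn_divLR ?(npos r). Qed.
Lemma mlt (r : 'I_(n*n)) : r %% n < n.
Proof. by rewrite ltn_pmod ?(npos r). Qed.
Lemma mklt (k i : 'I_n) : k * n + i < n * n.
Proof. have := ltn_ord k; have := ltn_ord i; nia. Qed.

Definition q (r : 'I_(n*n)) : 'I_n := Ordinal (qlt r).
Definition m (r : 'I_(n*n)) : 'I_n := Ordinal (mlt r).
Definition mk (k i : 'I_n) : 'I_(n*n) := Ordinal (mklt k i).

Lemma q_mk k i : q (mk k i) = k.
Proof. have np : 0 < n := leq_ltn_trans (leq0n _) (ltn_ord k).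
apply/val_inj => /=; rewrite divnMDl // divn_small ?addn0 //. Qed.
Lemma q_mk_val k i : (mk k i) %/ n = k.
Proof. exact: (congr1 val (q_mk k i)). Qed.
Lemma m_mk k i : m (mk k i) = i.
Proof. apply/val_inj => /=; rewrite modnMDl modn_small //. Qed.
Lemma mk_qm r : mk (q r) (m r) = r.
Proof. apply/val_inj => /=; by rewrite -divn_eq. Qed.
End Idx.

Lemma transfer (T1 T2 : finType) (g : T1 -> T2) (S1 : {set T1}) (S2 : {set T2})
  (d1 : rel T1) (d2 : rel T2) :
  injective g -> S2 = g @: S1 -> (forall x y, d2 (g x) (g y) = d1 x y) ->
  num_unordered_disjoint_pairs S2 d2 = num_unordered_disjoint_pairs S1 d1.
Proof.
move=> ginj -> gd; rewrite /num_unordered_disjoint_pairs.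
rewrite -(card_imset _ (imset_inj ginj)); apply: eq_card => U2; rewrite [in LHS]inE; apply/idP/imsetP.
- case/and3P => sU c2 /forallP fa.
  have eU : U2 = g @: (g @^-1: U2).
    apply/setP => y; apply/idP/imsetP.
    + move=> yU; have := subsetP sU _ yU; case/imsetP => x _ ex.
      by exists x => //; rewrite inE -ex.
    + by case=> x; rewrite inE => ?  ->.
  exists (g @^-1: U2) => //; rewrite inE; apply/and3P; split.
  + apply/subsetP => x; rewrite inE => /(subsetP sU) /imsetP [x' x'S /ginj ->] //.
  + by rewrite -(card_imset _ ginj) -eU.
  + apply/forallP => x; apply/implyP; rewrite inE => xU; apply/forallP => y.
    apply/implyP; rewrite inE => yU; apply/implyP => nxy.
    rewrite -gd; have := fa (g x); rewrite xU /= => /forallP /(_ (g y)).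
    by rewrite yU (inj_eq ginj) nxy.
- case=> U1; rewrite inE => /and3P [sU c1 /forallP fa] ->.
  apply/and3P; split.
  + exact: imsetS.
  + by rewrite card_imset.
  + apply/forallP => x'; apply/implyP => /imsetP [x xU ->]; apply/forallP => y'.
    apply/implyP => /imsetP [y yU ->]; rewrite (inj_eq ginj) gd.
    by have := fa x; rewrite xU /= => /forallP /(_ y); rewrite yU.
Qed.
Definition gmx n (P : pmx n) : bmx n := (\matrix_(r, c) (P (q r) (q c) == (m r, m c)))%R.

Lemma gE n (P : pmx n) r c : gmx P r c = (P (q r) (q c) == (m r, m c)).
Proof. by rewrite mxE. Qed.

Lemma gE' n (P : pmx n) k l i j : gmx P (mk k i) (mk l j) = (P k l == (i, j)).
Proof. by rewrite gE !q_mk !m_mk. Qed.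

Lemma g_inj n : injective (@gmx n).
Proof.
move=> P Q e; apply/matrixP => k l.
have := gE' P k l (P k l).1 (P k l).2; rewrite e gE' -surjective_pairing eqxx.
by move/eqP.
Qed.

Lemma g_disj n (P Q : pmx n) : bmx_disjoint (gmx P) (gmx Q) = pmx_disjoint P Q.
Proof.
apply/forallP/forallP => H.
- move=> k; apply/forallP => l; apply/negP => /eqP e.
  have := H (mk k (P k l).1) => /forallP /(_ (mk l (P k l).2)).
  by rewrite !gE' -e -surjective_pairing eqxx.
- move=> r; apply/forallP => c; rewrite !gE; apply/negP => /andP [/eqP e1 /eqP e2].
  by have := H (q r) => /forallP /(_ (q c)); rewrite e1 e2 eqxx.
Qed.

Lemma surj_inj n (f : 'I_n -> 'I_n) : [set f j | j : 'I_n] == [set: 'I_n] ->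
  injective f /\ forall i, exists j, f j = i.
Proof.
move=> /eqP e; split.
- have /imset_injP H : #|[set f j | j : 'I_n]| == #|'I_n| by rewrite e cardsT.
  by move=> x y fe; apply: H.
- move=> i; have : i \in [set f j | j : 'I_n] by rewrite e inE.
  by case/imsetP => j _ ->; exists j.
Qed.

Lemma card1_of (T : finType) (p : pred T) x :
  (forall y, p y = (y == x)) -> #|[set y | p y]| == 1.
Proof.
move=> H; apply/cards1P; exists x; apply/setP => y; by rewrite !inE H.
Qed.

Lemma Pi_Sperm n (P : pmx n) : is_Pi P -> is_Sperm (gmx P).
Proof.
case/andP => /forallP hr /forallP hc; apply/and3P; split.
- apply/forallP => r; have [inj sur] := surj_inj (hr (q r)).
  have [l hl] := sur (m r).
  apply: (card1_of (x := mk l (P (q r) l).2)) => c.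
  rewrite gE; apply/eqP/eqP => [e | ->].
  + have e1 : q c = l by apply: inj; rewrite e hl.
    by rewrite -(mk_qm c) e1; congr mk; rewrite -e1 e.
  + by rewrite q_mk m_mk -hl -surjective_pairing.
- apply/forallP => c; have [inj sur] := surj_inj (hc (q c)).
  have [k hk] := sur (m c).
  apply: (card1_of (x := mk k (P k (q c)).1)) => r.
  rewrite gE; apply/eqP/eqP => [e | ->].
  + have e1 : q r = k by apply: inj; rewrite /= e hk.
    by rewrite -(mk_qm r) e1; congr mk; rewrite -e1 e.
  + by rewrite q_mk m_mk -hk -surjective_pairing.
- apply/forallP => k; apply/forallP => l.
  apply: (card1_of (x := (mk k (P k l).1, mk l (P k l).2))) => [[r c]] /=.
  rewrite gE; apply/idP/idP.
  + case/and3P => /eqP e /eqP ek /eqP el.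
    have ek' : q r = k by apply: val_inj. have el' : q c = l by apply: val_inj.
    rewrite ek' el' in e; by rewrite -(mk_qm r) -(mk_qm c) ek' el' e.
  + case/eqP => -> ->; by rewrite !q_mk !m_mk -surjective_pairing !q_mk_val !eqxx.
Qed.

Lemma card1_ex (T : finType) (p : pred T) :
  #|[set y | p y]| == 1 -> exists x, forall y, p y = (y == x).
Proof.
case/cards1P => x e; exists x => y.
have : y \in [set y | p y] = (y \in [set x]) by rewrite e.
by rewrite !inE.
Qed.

Lemma Sperm_Pi n (P : pmx n) : is_Sperm (gmx P) -> is_Pi P.
Proof.
case/and3P => /forallP hr /forallP hc _; apply/andP; split.
- apply/forallP => k; apply/eqP/setP => i; rewrite inE; apply/imsetP.
  have [c hcx] := card1_ex (hr (mk k i)).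
  have := hcx c; rewrite eqxx gE q_mk m_mk => /eqP e.
  by exists (q c) => //; rewrite e.
- apply/forallP => l; apply/eqP/setP => j; rewrite inE; apply/imsetP.
  have [r hrx] := card1_ex (hc (mk l j)).
  have := hrx r; rewrite eqxx gE q_mk m_mk => /eqP e.
  by exists (q r) => //; rewrite e.
Qed.

Definition Pof n (A : bmx n) : pmx n := (\matrix_(k < n, l < n)
  (if [pick p : 'I_(n*n) * 'I_(n*n) | [&& A p.1 p.2, (p.1 %/ n)%N == k & (p.2 %/ n)%N == l]]
   is Some p then (m p.1, m p.2) else (k, l)))%R.

Lemma Pof_g n (A : bmx n) : is_Sperm A -> gmx (Pof A) = A.
Proof.
case/and3P => _ _ /forallP hb; apply/matrixP => r c; rewrite gE mxE.
have := hb (q r) => /forallP /(_ (q c)) /card1_ex [x hx].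
case: pickP => [p hp | H]; last first.
  by have := H x; rewrite hx eqxx.
have hrc := hx (r, c); rewrite /= !eqxx !andbT in hrc.
have ep : p = x by apply/eqP; rewrite -hx.
case Arc: (A r c).
- move: hrc; rewrite Arc => /esym /eqP exr; rewrite ep -exr /=; exact: eqxx.
- apply/negbTE/negP => /eqP [e1 e2].
  case/and3P: hp => Ap /eqP q1 /eqP q2.
  have {}e1 : m p.1 = m r := @val_inj _ _ _ (m p.1) (m r) e1.
  have {}e2 : m p.2 = m c := @val_inj _ _ _ (m p.2) (m c) e2.
  have E1 : p.1 = r.
    rewrite -(mk_qm p.1) -(mk_qm r) e1; congr mk; exact: val_inj.
  have E2 : p.2 = c.
    rewrite -(mk_qm p.2) -(mk_qm c) e2; congr mk; exact: val_inj.
  by rewrite -E1 -E2 Ap in Arc.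
Qed.

Lemma Sigma_img n : Sigma n = @gmx n @: Pi n.
Proof.
apply/setP => A; rewrite inE; apply/idP/imsetP.
- move=> hA; exists (Pof A); last by rewrite Pof_g.
  by rewrite inE; apply: Sperm_Pi; rewrite Pof_g.
- by case=> P; rewrite inE => /Pi_Sperm ? ->.
Qed.

Theorem mainTheorem2 (n : nat) (hn : 2 <= n) :
  num_unordered_disjoint_pairs (Sigma n) (@bmx_disjoint n) =
  num_unordered_disjoint_pairs (Pi n) (@pmx_disjoint n).
Proof.
apply: transfer; [exact: g_inj | exact: Sigma_img | exact: g_disj].
Qed.
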